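(* Let $N, K \ge 1$ be integers and let $\lambda^-, \lambda^+ \in [-1,1]$. Let $W \in \mathbb{R}^{N\times N}$ belong to the class $\mathcal{W}(\lambda^-,\lambda^+)$ (defined in the context), and let $X, Y \in \mathbb{R}^{N\times K}$ satisfy $Y = WX$. Write $X = \mathbf{1}\bar{X}^T + X_c$ and $Y = \mathbf{1}\bar{Y}^T + Y_c$, where $\mathbf{1} = [1,\dots,1]^T \in \mathbb{R}^N$ and $\bar{X}, \bar{Y} \in \mathbb{R}^K$ are the column averages, $\bar{X}_k = \frac1N\sum_{i=1}^N X_{ik}$, $\bar{Y}_k = \frac1N\sum_{i=1}^N Y_{ik}$. Then: (i) the matrices $X^TY$ and $X_c^TY_c$ are symmetric; (ii) the following hold: $$\bar{X} = \bar{Y},$$ $$\lambda^- X_c^TX_c \preceq X_c^TY_c \preceq \lambda^+ X_c^TX_c,$$ $$(Y_c - \lambda^- X_c)^T(Y_c - \lambda^+ X_c) \preceq 0,$$ where $A \preceq B$ means $B - A$ is positive semidefinite; (iii) the three constraints in (ii) are LMI Gram-representable, i.e. each can be expressed as a finite set of linear matrix inequality (or linear) constraints in the entries of the Gram matrix of the scalars/vectors $\{X_{ik}, Y_{ik}\}_{i,k}$.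
   Context: $\mathcal{W}(\lambda^-,\lambda^+)$ denotes the set of real symmetric $N\times N$ matrices $W$ that are generalized doubly stochastic (i.e. $\sum_{i=1}^N w_{ij} = 1$ for all $j$ and $\sum_{j=1}^N w_{ij}=1$ for all $i$, with no nonnegativity requirement on the entries), and whose eigenvalues, apart from the eigenvalue $\lambda_1 = 1$ (associated with the eigenvector $\mathbf{1}$), all lie in $[\lambda^-,\lambda^+]$: $\lambda^- \le \lambda_N \le \dots \le \lambda_2 \le \lambda^+$. In the application, $X_{ik} = x_i^k$ and $Y_{ik} = y_i^k$ are one-dimensional local variables of agent $i$ at consensus step $k$, and the consensus step is $y_i^k = \sum_j w_{ij} x_j^k$. A constraint is called linearly (resp. LMI) Gram-representable if it can be expressed using a finite set of linear (resp. linear matrix inequality) constraints involving (parts of) the Gram matrix $G = P^TP$ of the variables collected as columns of $P$ (and possibly a vector of function values). *)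

(* Defs.v *)
From HB Require Import structures.
From mathcomp Require Import all_boot all_order all_algebra.
From mathcomp Require Import reals.
Set Implicit Arguments. Unset Strict Implicit. Unset Printing Implicit Defensive.
Import Order.TTheory GRing.Theory Num.Theory.
Local Open Scope ring_scope.

Section Defs.
Variable R : realType.

Definition ones (N : nat) : 'cV[R]_N := const_mx 1.

Definition colavg (N K : nat) (X : 'M[R]_(N, K)) : 'cV[R]_K :=
  \col_k (N%:R^-1 * \sum_(i < N) X i k).

Definition centered (N K : nat) (X : 'M[R]_(N, K)) : 'M[R]_(N, K) :=
  X - ones N *m (colavg X)^T.

Definition psd (n : nat) (M : 'M[R]_n) : Prop :=
  M^T = M /\ forall v : 'cV[R]_n, 0 <= (v^T *m M *m v) ord0 ord0.

Definition loewner_le (n : nat) (A B : 'M[R]_n) : Prop := psd (B - A).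

Definition gen_doubly_stochastic (N : nat) (W : 'M[R]_N) : Prop :=
  (forall j, \sum_(i < N) W i j = 1) /\ (forall i, \sum_(j < N) W i j = 1).

(* W in the class W(lm, lp): real symmetric, generalized doubly stochastic,
   and the eigenvalues other than lambda_1 = 1 (i.e. the roots of the
   characteristic polynomial once one factor (X - 1) is removed) lie in
   [lm, lp]. *)
Definition in_class_W (lm lp : R) (N : nat) (W : 'M[R]_N) : Prop :=
  W^T = W /\ gen_doubly_stochastic W /\
  exists p : {poly R}, char_poly W = ('X - 1%:P) * p /\
    forall x : R, root p x -> lm <= x <= lp.

Definition var_vec (N K : nat) (X Y : 'M[R]_(N, K)) : 'rV[R]_(N * K + N * K) :=
  row_mx (mxvec X) (mxvec Y).

Definition gram (N K : nat) (X Y : 'M[R]_(N, K)) : 'M[R]_(N * K + N * K) :=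
  (var_vec X Y)^T *m var_vec X Y.

End Defs.

(* Main.v *)
Require Import Defs.
From HB Require Import structures.
From mathcomp Require Import all_boot all_order all_algebra.
From mathcomp Require Import reals.
From mathcomp Require Import complex ring lra.
Import Order.TTheory GRing.Theory Num.Theory Num.Def.
Local Open Scope ring_scope.
Lemma char_poly_similar (F : fieldType) n (P A : 'M[F]_n) :
  P \in unitmx -> char_poly (invmx P *m A *m P) = char_poly A.
Proof.
move=> Pu; rewrite /char_poly /char_poly_mx.
set P' := map_mx polyC P; set Q' := map_mx polyC (invmx P).
have QP : Q' *m P' = 1%:M by rewrite -map_mxM mulVmx // map_mx1.
have -> : map_mx polyC (invmx P *m A *m P) = Q' *m map_mx polyC A *m P'.
  by rewrite !map_mxM.
have {1}-> : ('X%:M : 'M[{poly F}]_n) = Q' *m 'X%:M *m P'.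
  by rewrite -mulmxA -scalar_mxC mulmxA QP mul1mx.
rewrite -mulmxBl -mulmxBr !det_mulmx mulrC mulrA -det_mulmx.
have QP1 : \det (P' *m Q') = 1 by rewrite det_mulmx mulrC -det_mulmx QP det1.
by rewrite QP1 mul1r.
Qed.
Section Core.
Variable R : realType.
Local Notation C := (R[i]).
Local Notation f := (real_complex R).
Local Open Scope sesquilinear_scope.

Lemma fC_real (x : R) : (f x : C) \is Num.real.
Proof. by rewrite complex_real. Qed.

Lemma conj_fC (x : R) : conjC (f x : C) = f x.
Proof. exact/conj_Creal/fC_real. Qed.

Lemma conj_rowP n (P : 'M[C]_n) (v : 'rV[R]_n) k :
  conjC (((map_mx f v) *m P^t*) 0 k) = (P *m (map_mx f v)^T) k 0.
Proof.
rewrite !mxE rmorph_sum; apply: eq_bigr => i _.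
by rewrite !mxE rmorphM /= conj_fC conjCK mulrC.
Qed.


Lemma core n (W : 'M[R]_n) (lm lp a b c : R) (p : {poly R}) :
  W^T = W -> (forall j, \sum_i W i j = 1) ->
  char_poly W = ('X - 1%:P) * p -> (forall x, root p x -> lm <= x <= lp) ->
  (forall x, lm <= x <= lp -> 0 <= a + b * x + c * x ^+ 2) ->
  forall u : 'rV[R]_n, \sum_i u 0 i = 0 ->
  0 <= (u *m (a%:M + b *: W + c *: (W *m W)) *m u^T) 0 0.
Proof.
move=> WT Wcol Wchar Wroots Habc u usum.
set Wc := map_mx f W.
have herm : Wc \is hermsymmx.
  rewrite qualifE /= expr0 scale1r; apply/eqP/matrixP => i j.
  by rewrite /Wc !mxE conj_fC -[W in LHS]WT mxE.
set P := spectralmx Wc; set d := spectral_diag Wc.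
have WcE : Wc = invmx P *m diag_mx d *m P.
  by apply/orthomx_spectralP/hermitian_normalmx.
have Pu : P \is unitarymx := spectral_unitarymx Wc.
have Punit : P \in unitmx := spectral_unit Wc.
have PV : invmx P = P^t* := invmx_unitary Pu.
have PPt : P *m P^t* = 1%:M by apply/unitarymxP.
have PtP : P^t* *m P = 1%:M by rewrite -PV mulVmx.
have dreal : forall j, d 0 j \is Num.real.
  by move=> j; have /mxOverP := hermitian_spectral_diag_real herm; apply.
have charE : ('X - 1%:P) * map_poly f p = \prod_j ('X - (d 0 j)%:P).
  rewrite -map_polyXsubC rmorph1 -rmorphM /= -Wchar map_char_poly -/Wc WcE.
  rewrite char_poly_similar // char_poly_trig ?diag_mx_is_trig //.
  by apply: eq_bigr => j _; rewrite mxE eqxx mulr1n.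
have [j0 dj0] : exists j0, d 0 j0 = 1.
  have : root (\prod_j ('X - (d 0 j)%:P)) 1 by rewrite -charE rootM root_XsubC eqxx.
  rewrite /root horner_prod => /prodf_eq0 [j _].
  by rewrite hornerXsubC subr_eq0 => /eqP dj; exists j; rewrite -dj.
have pE : map_poly f p = \prod_(j | j != j0) ('X - (d 0 j)%:P).
  apply: (@mulfI _ ('X - 1%:P)); first by rewrite polyXsubC_eq0.
  by rewrite charE (bigD1 j0) //= dj0.
have good : forall j, j != j0 -> lm <= complex.Re (d 0 j) <= lp.
  move=> j jj0; apply: Wroots; rewrite -(fmorph_root f) /= RRe_real // pE.
  rewrite /root horner_prod; apply/prodf_eq0; exists j => //.
  by rewrite hornerXsubC subrr.
set D := diag_mx d.
have WcE' : Wc = P^t* *m D *m P by rewrite WcE PV.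
have WcPt : Wc *m P^t* = P^t* *m D by rewrite WcE' -!mulmxA PPt mulmx1.
have WW : Wc *m Wc = P^t* *m (D *m D) *m P by rewrite {2}WcE' !mulmxA WcPt.
set e := fun j => f a + f b * d 0 j + f c * d 0 j ^+ 2.
set M := a%:M + b *: W + c *: (W *m W).
have McE : map_mx f M = P^t* *m diag_mx (\row_j e j) *m P.
  have -> : diag_mx (\row_j e j) = (f a)%:M + f b *: D + f c *: (D *m D).
    apply/matrixP => i j; rewrite /D mulmx_diag !mxE.
    by rewrite /e; case: (i == j); rewrite ?mulr1n ?mulr0n ?expr2 ?mulr0 ?addr0.
  rewrite /M map_mxD map_mxD !map_mxZ map_scalar_mx map_mxM -/Wc.
  rewrite !mulmxDr !mulmxDl -!scalemxAr -!scalemxAl.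
  rewrite -mulmxA -scalar_mxC mulmxA PtP mul1mx -WcE'.
  by rewrite WW.
set uc := map_mx f u.
set z := uc *m P^t*.
have qE : f ((u *m M *m u^T) 0 0) = \sum_j e j * (z 0 j * conjC (z 0 j)).
  have -> : f ((u *m M *m u^T) 0 0) = (map_mx f (u *m M *m u^T)) 0 0.
    by rewrite [RHS]mxE.
  have ucT : map_mx f u^T = uc^T by rewrite map_trmx.
  rewrite !map_mxM McE ucT !mulmxA -/z -(mulmxA _ P) mxE.
  apply: eq_bigr => j _; rewrite -conj_rowP -/uc -/z mul_mx_diag !mxE.
  by rewrite [_ * e j]mulrC mulrA.
suff Hj : forall j, 0 <= e j \/ z 0 j = 0.
  rewrite -ler0c qE; apply: sumr_ge0 => j _.
  case: (Hj j) => [ej|->]; last by rewrite mul0r mulr0.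
  by apply: mulr_ge0 => //; apply: mul_conjC_ge0.
have eE : forall x, f a + f b * f x + f c * f x ^+ 2 = f (a + b * x + c * x ^+ 2).
  by move=> x; rewrite !expr2 rmorphD rmorphD !rmorphM.
have egood : forall j, j != j0 -> 0 <= e j.
  move=> j jj0; have h := good j jj0.
  by rewrite /e -(RRe_real (dreal j)) eE ler0c; apply: Habc.
case: (boolP [exists k, (k != j0) && (d 0 k == 1)]) => [|/existsPn noK].
  move=> /existsP[k /andP[kj0 /eqP dk1]] j; left.
  case: (eqVneq j j0) => [->|/egood//].
  have h := good k kj0; rewrite dk1 /= in h.
  by rewrite /e dj0 -(rmorph1 f) eE ler0c; apply: Habc.
move=> j; case: (eqVneq j j0) => [->|/egood]; last by left.
right.
set one := (const_mx 1 : 'rV[R]_n); set oc := map_mx f one; set cr := oc *m P^t*.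
have ocW : oc *m Wc = oc.
  rewrite /oc /Wc -map_mxM; congr map_mx; apply/matrixP => i k.
  rewrite !mxE -(Wcol k); apply: eq_bigr => l _; by rewrite mxE mul1r.
have crD : forall k, cr 0 k * d 0 k = cr 0 k.
  move=> k; have : cr *m D = cr by rewrite /cr -mulmxA -WcPt mulmxA ocW.
  by move/matrixP/(_ 0 k); rewrite /D mul_mx_diag mxE.
have cr0 : forall k, k != j0 -> cr 0 k = 0.
  move=> k kj0; have := noK k; rewrite kj0 /= => dk.
  have := crD k; move/eqP; rewrite -subr_eq0 -{2}[cr 0 k]mulr1 -mulrBr mulf_eq0.
  by rewrite subr_eq0 (negbTE dk) orbF => /eqP.
have sum0 : \sum_k z 0 k * conjC (cr 0 k) = 0.
  under eq_bigr do rewrite /cr /oc conj_rowP.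
  have -> : \sum_k z 0 k * (P *m (map_mx f one)^T) k 0 = (z *m (P *m (map_mx f one)^T)) 0 0.
    by rewrite [RHS]mxE.
  rewrite /z mulmxA -(mulmxA uc) PtP mulmx1 /uc map_trmx -map_mxM mxE mxE.
  under eq_bigr do rewrite !mxE mulr1.
  by rewrite usum rmorph0.
have z0 : z 0 j0 * conjC (cr 0 j0) = 0.
  by rewrite -sum0 (bigD1 j0) //= big1 ?addr0 // => k kj0; rewrite cr0 // rmorph0 mulr0.
have crj0 : cr 0 j0 != 0.
  apply/negP => /eqP c0.
  have crz : cr = 0.
    apply/matrixP => i k; rewrite ord1 [RHS]mxE; case: (eqVneq k j0) => [->|/cr0 //]; exact: c0.
  have : oc = 0 by rewrite -[oc]mulmx1 -PtP mulmxA -/cr crz mul0mx.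
  move/matrixP/(_ 0 j0); rewrite !mxE rmorph1 => /eqP; by rewrite oner_eq0.
by move: z0 => /eqP; rewrite mulf_eq0 conjC_eq0 (negbTE crj0) orbF => /eqP.
Qed.
End Core.
Section Gram.
Variable R : realType.
Variables N K : nat.
Local Notation n2 := (N * K + N * K)%N.

Definition ex (i : 'I_N) (k : 'I_K) : 'cV[R]_n2 := delta_mx (lshift (N*K) (mxvec_index i k)) 0.
Definition ey (i : 'I_N) (k : 'I_K) : 'cV[R]_n2 := delta_mx (rshift (N*K) (mxvec_index i k)) 0.

Lemma ex_val (X Y : 'M[R]_(N, K)) i k : (var_vec X Y *m ex i k) 0 0 = X i k.
Proof. by rewrite /ex -colE mxE /var_vec row_mxEl mxvecE. Qed.
Lemma ey_val (X Y : 'M[R]_(N, K)) i k : (var_vec X Y *m ey i k) 0 0 = Y i k.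
Proof. by rewrite /ey -colE mxE /var_vec row_mxEr mxvecE. Qed.

Lemma lin_sub (v : 'rV[R]_n2) (c d : 'cV[R]_n2) :
  (v *m (c - d)) 0 0 = (v *m c) 0 0 - (v *m d) 0 0.
Proof. by rewrite mulmxBr !mxE. Qed.
Lemma lin_scale (v : 'rV[R]_n2) a (c : 'cV[R]_n2) :
  (v *m (a *: c)) 0 0 = a * (v *m c) 0 0.
Proof. by rewrite -scalemxAr !mxE. Qed.
Lemma lin_sum (v : 'rV[R]_n2) I (r : seq I) (F : I -> 'cV[R]_n2) :
  (v *m (\sum_(i <- r) F i)) 0 0 = \sum_(i <- r) (v *m F i) 0 0.
Proof.
elim: r => [|x r IH]; first by rewrite !big_nil mulmx0 mxE.
by rewrite !big_cons mulmxDr mxE IH.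
Qed.

Lemma tr_rank1 (v : 'rV[R]_n2) (c d : 'cV[R]_n2) :
  \tr ((c *m d^T) *m (v^T *m v)) = (v *m c) 0 0 * (v *m d) 0 0.
Proof.
rewrite mulmxA mxtrace_mulC trace_mx11 !mulmxA -mulmxA -trmx_mul.
by rewrite mxE big_ord1 !mxE.
Qed.

Lemma centeredE (X : 'M[R]_(N, K)) i k :
  centered X i k = X i k - N%:R^-1 * \sum_j X j k.
Proof. by rewrite /centered !mxE big_ord1 !mxE mul1r. Qed.

Definition cx (i : 'I_N) (k : 'I_K) : 'cV[R]_n2 := ex i k - N%:R^-1 *: \sum_j ex j k.
Definition cy (i : 'I_N) (k : 'I_K) : 'cV[R]_n2 := ey i k - N%:R^-1 *: \sum_j ey j k.

Lemma cx_val (X Y : 'M[R]_(N, K)) i k : (var_vec X Y *m cx i k) 0 0 = centered X i k.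
Proof.
rewrite /cx lin_sub lin_scale lin_sum ex_val centeredE; congr (_ - _ * _).
by apply: eq_bigr => j _; rewrite ex_val.
Qed.
Lemma cy_val (X Y : 'M[R]_(N, K)) i k : (var_vec X Y *m cy i k) 0 0 = centered Y i k.
Proof.
rewrite /cy lin_sub lin_scale lin_sum ey_val centeredE; congr (_ - _ * _).
by apply: eq_bigr => j _; rewrite ey_val.
Qed.

Lemma tr_sum_rank1 (X Y : 'M[R]_(N, K)) (c d : 'I_N -> 'cV[R]_n2) :
  \tr ((\sum_i c i *m (d i)^T) *m gram X Y) =
  \sum_i (var_vec X Y *m c i) 0 0 * (var_vec X Y *m d i) 0 0.
Proof.
rewrite mulmx_suml raddf_sum; apply: eq_bigr => i _.
exact: tr_rank1.
Qed.

Lemma trB (A B G : 'M[R]_n2) : \tr ((A - B) *m G) = \tr (A *m G) - \tr (B *m G).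
Proof. by rewrite mulmxBl raddfB. Qed.
Lemma trZ a (A G : 'M[R]_n2) : \tr ((a *: A) *m G) = a * \tr (A *m G).
Proof. by rewrite -scalemxAl mxtraceZ. Qed.
Lemma trN (A G : 'M[R]_n2) : \tr ((- A) *m G) = - \tr (A *m G).
Proof. by rewrite mulNmx raddfN. Qed.

Lemma gram_rep (lm lp : R) :
  exists (A : 'I_K -> 'M[R]_(N * K + N * K))
          (B1 B2 C : 'I_K -> 'I_K -> 'M[R]_(N * K + N * K)),
     forall X' Y' : 'M[R]_(N, K),
       let G := gram X' Y' in
       let Xc' := centered X' in let Yc' := centered Y' in
       (colavg X' = colavg Y' <-> forall k, \tr (A k *m G) = 0) /\
       (loewner_le (lm *: (Xc'^T *m Xc')) (Xc'^T *m Yc') <->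
          psd (\matrix_(k, l) \tr (B1 k l *m G))) /\
       (loewner_le (Xc'^T *m Yc') (lp *: (Xc'^T *m Xc')) <->
          psd (\matrix_(k, l) \tr (B2 k l *m G))) /\
       (loewner_le ((Yc' - lm *: Xc')^T *m (Yc' - lp *: Xc')) 0 <->
          psd (\matrix_(k, l) \tr (C k l *m G))).
Proof.
pose a k := \sum_i (ex i k - ey i k).
exists (fun k => a k *m (a k)^T).
exists (fun k l => \sum_i cx i k *m (cy i l)^T - lm *: \sum_i cx i k *m (cx i l)^T).
exists (fun k l => lp *: \sum_i cx i k *m (cx i l)^T - \sum_i cx i k *m (cy i l)^T).
exists (fun k l => - \sum_i (cy i k - lm *: cx i k) *m (cy i l - lp *: cx i l)^T).
move=> X Y G Xc Yc; split; last split; last split.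
- have av : forall k, (var_vec X Y *m a k) 0 0 = \sum_i (X i k - Y i k).
    by move=> k; rewrite lin_sum; apply: eq_bigr => i _; rewrite lin_sub ex_val ey_val.
  have trA : forall k, \tr (a k *m (a k)^T *m G) = (\sum_i (X i k - Y i k)) * (\sum_i (X i k - Y i k)).
    by move=> k; rewrite /G /gram tr_rank1 av.
  split.
  + move=> /colP h k; have := h k; rewrite !mxE trA => hk.
    suff -> : \sum_i (X i k - Y i k) = 0 by rewrite mulr0.
    rewrite sumrB; apply/eqP; rewrite subr_eq0; apply/eqP.
    case: (eqVneq (N%:R^-1 : R) 0) => [N0|Nn0]; last exact: (mulfI Nn0).
    move/eqP: N0; rewrite invr_eq0 pnatr_eq0 => /eqP N0.
    by rewrite !big1 // => -[i Hi] _; exfalso; move: Hi; rewrite N0.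
  + move=> h; apply/colP => k; rewrite !mxE; move: (h k); rewrite trA => /eqP.
    by rewrite mulf_eq0 orbb sumrB subr_eq0 => /eqP ->.
- rewrite /loewner_le; suff -> : \matrix_(k, l) \tr ((\sum_i cx i k *m (cy i l)^T -
     lm *: \sum_i cx i k *m (cx i l)^T) *m G) = Xc^T *m Yc - lm *: (Xc^T *m Xc) by [].
  apply/matrixP => k l; rewrite !mxE trB trZ /G !tr_sum_rank1.
  by congr (_ - _ * _); apply: eq_bigr => i _; rewrite ?cx_val ?cy_val !mxE.
- rewrite /loewner_le; suff -> : \matrix_(k, l) \tr ((lp *: \sum_i cx i k *m (cx i l)^T -
     \sum_i cx i k *m (cy i l)^T) *m G) = lp *: (Xc^T *m Xc) - Xc^T *m Yc by [].
  apply/matrixP => k l; rewrite !mxE trB trZ /G !tr_sum_rank1.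
  by congr (_ * _ - _); apply: eq_bigr => i _; rewrite ?cx_val ?cy_val !mxE.
- rewrite /loewner_le; suff -> : \matrix_(k, l) \tr ((- \sum_i (cy i k - lm *: cx i k) *m
     (cy i l - lp *: cx i l)^T) *m G) = 0 - (Yc - lm *: Xc)^T *m (Yc - lp *: Xc) by [].
  apply/matrixP => k l; rewrite !mxE trN /G !tr_sum_rank1 add0r; congr (- _).
  apply: eq_bigr => i _; rewrite (lin_sub _ (cy i k)) (lin_sub _ (cy i l)).
  by rewrite !lin_scale !cx_val !cy_val !mxE.
Qed.
End Gram.

Section Main.
Variable R : realType.
Variables N K : nat.

Lemma psd_from (Xc : 'M[R]_(N, K)) (Q : 'M[R]_N) : Q^T = Q ->
  (forall u : 'rV_N, \sum_i u 0 i = 0 -> 0 <= (u *m Q *m u^T) 0 0) ->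
  (forall k, \sum_i Xc i k = 0) -> psd (Xc^T *m Q *m Xc).
Proof.
move=> QT Hq Hs; split; first by rewrite !trmx_mul trmxK QT mulmxA.
move=> v; set u := (Xc *m v)^T.
have -> : v^T *m (Xc^T *m Q *m Xc) *m v = u *m Q *m u^T.
  by rewrite /u trmxK trmx_mul !mulmxA.
apply: Hq; rewrite /u; under eq_bigr do rewrite !mxE.
rewrite exchange_big /=; apply: big1 => k _.
by rewrite -mulr_suml Hs mul0r.
Qed.

Lemma centered_sum (X : 'M[R]_(N, K)) k : (0 < N)%N -> \sum_i centered X i k = 0.
Proof.
move=> N0; under eq_bigr do rewrite centeredE.
rewrite sumrB sumr_const card_ord -(mulr_natl (N%:R^-1 * _)) mulrA mulfV ?mul1r ?subrr //.
by rewrite pnatr_eq0 -lt0n.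
Qed.

End Main.

Theorem theorem2 (R : realType) (N K : nat) (lm lp : R) :
  (0 < N)%N -> (0 < K)%N ->
  -1 <= lm <= 1 -> -1 <= lp <= 1 ->
  forall (W : 'M[R]_N) (X Y : 'M[R]_(N, K)),
  in_class_W lm lp W -> Y = W *m X ->
  let Xc := centered X in let Yc := centered Y in
  (* (i) symmetry *)
  ((X^T *m Y)^T = X^T *m Y /\ (Xc^T *m Yc)^T = Xc^T *m Yc) /\
  (* (ii) the three constraints *)
  (colavg X = colavg Y /\
   loewner_le (lm *: (Xc^T *m Xc)) (Xc^T *m Yc) /\
   loewner_le (Xc^T *m Yc) (lp *: (Xc^T *m Xc)) /\
   loewner_le ((Yc - lm *: Xc)^T *m (Yc - lp *: Xc)) 0) /\
  (* (iii) LMI Gram-representability: there are fixed coefficient matrices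
     (independent of X, Y) such that each constraint is equivalent to linear
     / linear-matrix-inequality constraints on the Gram matrix G of the
     scalars {X_ik, Y_ik} *)
  (exists (A : 'I_K -> 'M[R]_(N * K + N * K))
          (B1 B2 C : 'I_K -> 'I_K -> 'M[R]_(N * K + N * K)),
     forall X' Y' : 'M[R]_(N, K),
       let G := gram X' Y' in
       let Xc' := centered X' in let Yc' := centered Y' in
       (colavg X' = colavg Y' <-> forall k, \tr (A k *m G) = 0) /\
       (loewner_le (lm *: (Xc'^T *m Xc')) (Xc'^T *m Yc') <->
          psd (\matrix_(k, l) \tr (B1 k l *m G))) /\
       (loewner_le (Xc'^T *m Yc') (lp *: (Xc'^T *m Xc')) <->
          psd (\matrix_(k, l) \tr (B2 k l *m G))) /\
       (loewner_le ((Yc' - lm *: Xc')^T *m (Yc' - lp *: Xc')) 0 <->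
          psd (\matrix_(k, l) \tr (C k l *m G)))).
Proof.
move=> N0 K0 hlm hlp W X Y [WT [[Wcol Wrow] [p [Wchar Wroots]]]] YE Xc Yc.
have sumY : forall k, \sum_i Y i k = \sum_i X i k.
  move=> k; rewrite YE; under eq_bigr do rewrite mxE.
  rewrite exchange_big /=; apply: eq_bigr => j _.
  by rewrite -mulr_suml Wcol mul1r.
have YcE : Yc = W *m Xc.
  apply/matrixP => i k; rewrite /Yc centeredE sumY YE [(W *m X) i k]mxE [RHS]mxE.
  under [RHS]eq_bigr do rewrite /Xc centeredE mulrBr.
  by rewrite sumrB -mulr_suml Wrow mul1r.
have Xcs : forall k, \sum_i Xc i k = 0 by move=> k; apply: centered_sum.
clearbody Xc Yc.
have QT : forall a b c : R, (a%:M + b *: W + c *: (W *m W))^T = a%:M + b *: W + c *: (W *m W).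
  by move=> a b c; rewrite !linearD !linearZ /= tr_scalar_mx trmx_mul WT.
have coreW := fun a b c => @core R N W lm lp a b c p WT Wcol Wchar Wroots.
split; last split; last exact: gram_rep.
  split; first by rewrite YE !trmx_mul trmxK WT mulmxA.
  by rewrite YcE !trmx_mul trmxK WT mulmxA.
split; first by apply/colP => k; rewrite !mxE sumY.
split; last split.
- rewrite /loewner_le.
  have -> : Xc^T *m Yc - lm *: (Xc^T *m Xc) = Xc^T *m ((-lm)%:M + 1 *: W + 0 *: (W *m W)) *m Xc.
    rewrite YcE scale0r addr0 scale1r mulmxDr mulmxDl mul_mx_scalar -scalemxAl scaleNr addrC mulmxA.
    by [].
  apply: psd_from => //; apply: coreW => x /andP[h1 h2].
  by rewrite mul1r mul0r addr0 addrC subr_ge0.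
- rewrite /loewner_le.
  have -> : lp *: (Xc^T *m Xc) - Xc^T *m Yc = Xc^T *m (lp%:M + (-1) *: W + 0 *: (W *m W)) *m Xc.
    rewrite YcE scale0r addr0 scaleN1r mulmxDr mulmxDl mul_mx_scalar -scalemxAl mulmxN mulNmx mulmxA.
    by [].
  apply: psd_from => //; apply: coreW => x /andP[h1 h2].
  by rewrite mulN1r mul0r addr0 subr_ge0.
- rewrite /loewner_le.
  have h : forall t, Yc - t *: Xc = (W - t%:M) *m Xc.
    by move=> t; rewrite YcE mulmxBl mul_scalar_mx.
  have hT : forall t, (W - t%:M)^T = W - t%:M.
    by move=> t; rewrite linearB /= tr_scalar_mx WT.
  have -> : 0 - (Yc - lm *: Xc)^T *m (Yc - lp *: Xc) =
     Xc^T *m ((- (lm * lp))%:M + (lm + lp) *: W + (-1) *: (W *m W)) *m Xc.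
    have EQ : - ((W - lm%:M) *m (W - lp%:M)) =
        (- (lm * lp))%:M + (lm + lp) *: W + -1 *: (W *m W).
      rewrite mulmxBl !mulmxBr mul_mx_scalar mul_scalar_mx -scalar_mxM.
      apply/matrixP => i j; rewrite !mxE.
      by case: (i == j); rewrite ?mulr1n ?mulr0n; ring.
    by rewrite !h trmx_mul hT sub0r -EQ mulmxN mulNmx !mulmxA.
  apply: psd_from => //; apply: coreW => x /andP[h1 h2].
  have -> : - (lm * lp) + (lm + lp) * x + -1 * x ^+ 2 = (x - lm) * (lp - x) by ring.
  by apply: mulr_ge0; rewrite subr_ge0.
Qed.
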